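(* Let $\theta_{01}\in\mathbb{R}$ and let $\sigma_U^2>0$, $\sigma_V^2>0$, $\sigma_{UV}\in\mathbb{R}$ satisfy $|\rho_{UV}|<1$, where $\rho_{UV}=\sigma_{UV}/(\sigma_U\sigma_V)$. Define the identified set $S$ as the set of all $\sigma_{U^*}^2\ge 0$ for which there exist $\sigma_{V^*}^2\ge 0$, $\sigma_\varepsilon^2\ge 0$ and $\sigma_{U^*V^*}\in\mathbb{R}$ with $\sigma_{U^*V^*}^2\le \sigma_{U^*}^2\sigma_{V^*}^2$ such that $$\sigma_U^2=\sigma_{U^*}^2+\theta_{01}^2\sigma_\varepsilon^2,\qquad \sigma_V^2=\sigma_{V^*}^2+\sigma_\varepsilon^2,\qquad \sigma_{UV}=\sigma_{U^*V^*}-\theta_{01}\sigma_\varepsilon^2 .$$ Then $S=[\underline{\sigma}_{U^*}^2,\sigma_U^2]$, where $$\underline{\sigma}_{U^*}^2=\max\left\{\frac{(\theta_{01}\sigma_{UV}+\sigma_U^2)^2}{\sigma_V^2\theta_{01}^2+2\sigma_{UV}\theta_{01}+\sigma_U^2},\ \sigma_U^2-\theta_{01}^2\sigma_V^2\right\}.$$ *)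

(* Defs.v *)
From Stdlib Require Import Reals.
Open Scope R_scope.

Definition identified_set (theta su2 sv2 suv : R) (sustar2 : R) : Prop :=
  0 <= sustar2 /\
  exists svstar2 se2 suvstar : R,
    0 <= svstar2 /\ 0 <= se2 /\ suvstar ^ 2 <= sustar2 * svstar2 /\
    su2 = sustar2 + theta ^ 2 * se2 /\
    sv2 = svstar2 + se2 /\
    suv = suvstar - theta * se2.

Definition lower_bound (theta su2 sv2 suv : R) : R :=
  Rmax ((theta * suv + su2) ^ 2 / (sv2 * theta ^ 2 + 2 * suv * theta + su2))
       (su2 - theta ^ 2 * sv2).

(* Main.v *)
Require Import Defs.
From Stdlib Require Import Reals Lra Psatz.
Open Scope R_scope.

Theorem proposition1 (theta su2 sv2 suv : R) :
  0 < su2 -> 0 < sv2 ->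
  Rabs (suv / (sqrt su2 * sqrt sv2)) < 1 ->
  forall s : R,
    identified_set theta su2 sv2 suv s <->
    (lower_bound theta su2 sv2 suv <= s <= su2).
Proof.
  intros Ha Hb Hr s.
  set (a := su2) in *. set (b := sv2) in *. set (c := suv) in *. set (t := theta) in *.
  assert (Hq : 0 < sqrt a * sqrt b).
  { apply Rmult_lt_0_compat; apply sqrt_lt_R0; assumption. }
  assert (Hq2 : (sqrt a * sqrt b) * (sqrt a * sqrt b) = a * b).
  { replace ((sqrt a * sqrt b) * (sqrt a * sqrt b)) with
      ((sqrt a * sqrt a) * (sqrt b * sqrt b)) by ring.
    rewrite !sqrt_sqrt; lra. }
  set (q := sqrt a * sqrt b) in *.
  set (x := c / q) in *.
  assert (Hc : c = x * q) by (unfold x; field; lra).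
  assert (Hx : -1 < x < 1) by (destruct (Rabs_def2 _ _ Hr); split; lra).
  assert (Hcc : c * c < a * b).
  { rewrite Hc. assert (x*x < 1) by (destruct Hx; assert (0 < (1-x)*(1+x)) by (apply Rmult_lt_0_compat; lra); lra). rewrite <- Hq2. assert (0 < q*q) by nra. nra. }
  set (D := b * t ^ 2 + 2 * c * t + a).
  assert (HD : 0 < D).
  { assert (b * D = (t*b + c)^2 + (a*b - c*c)) by (unfold D; ring). assert (0 < b * D) by (assert (0 <= (t*b+c)^2) by apply pow2_ge_0; lra). destruct (Rle_or_lt D 0) as [HD0|HD0]; [assert (b * D <= 0) by (assert (0 <= b * (- D)) by (apply Rmult_le_pos; lra); lra); lra | exact HD0]. }
  unfold lower_bound, identified_set. fold a b c t D.
  split.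
  - intros [Hs [svs [e [u [Hsv [He [Hu [E1 [E2 E3]]]]]]]]].
    split.
    + apply Rmax_lub.
      * unfold Rdiv. apply (Rmult_le_reg_r D); [exact HD|].
        rewrite Rmult_assoc, Rinv_l by lra. rewrite Rmult_1_r.
        assert (s * D - (t * c + a)^2 = t^2 * (s * svs - u^2)).
        { unfold D. rewrite E1, E2, E3. ring. }
        assert (0 <= t^2 * (s * svs - u^2)).
        { apply Rmult_le_pos; [apply pow2_ge_0 | lra]. }
        lra.
      * assert (0 <= t^2 * svs) by (apply Rmult_le_pos; [apply pow2_ge_0|lra]).
        rewrite E1, E2. nra.
    + assert (0 <= t^2 * e) by (apply Rmult_le_pos; [apply pow2_ge_0|lra]).
      lra.
  - intros [Hl Hs].
    assert (H2 := Rle_trans _ _ _ (Rmax_l ((t * c + a) ^ 2 / D) (a - t ^ 2 * b)) Hl).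
    assert (H3 := Rle_trans _ _ _ (Rmax_r ((t * c + a) ^ 2 / D) (a - t ^ 2 * b)) Hl).
    assert (H4 : (t * c + a)^2 <= s * D).
    { unfold Rdiv in H2. apply (Rmult_le_compat_r D) in H2; [|lra].
      rewrite Rmult_assoc, Rinv_l, Rmult_1_r in H2 by lra. exact H2. }
    destruct (Req_dec t 0) as [Ht | Ht].
    + assert (s = a).
      { rewrite Ht in H4. unfold D in H4. rewrite Ht in H4. nra. }
      split; [lra|].
      exists b, 0, c. rewrite Ht. repeat split; try lra; try ring; try (rewrite H; nra).
    + assert (Ht2 : 0 < t^2) by ((assert (t*t>0) by (apply Rsqr_pos_lt; exact Ht); simpl; lra)).
      set (e := (a - s) / t^2).
      assert (He : t^2 * e = a - s) by (unfold e; field; exact Ht).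
      assert (He0 : 0 <= e).
      { unfold e. apply Rmult_le_pos; [lra | left; apply Rinv_0_lt_compat; lra]. }
      assert (Hs0 : 0 <= s).
      { assert (0 <= (t*c+a)^2) by apply pow2_ge_0. nra. }
      split; [exact Hs0|].
      exists (b - e), e, (c + t * e).
      assert (Hid : s * D - (t * c + a)^2 = t^2 * (s * (b - e) - (c + t*e)^2)).
      { unfold D. replace s with (a - t^2 * e) by lra. ring. }
      repeat split.
      * nra.
      * exact He0.
      * assert (0 <= t^2 * (s * (b - e) - (c + t*e)^2)) by lra.
        assert (0 <= s * (b - e) - (c + t*e)^2).
        { apply (Rmult_le_reg_l (t^2)); [exact Ht2|]. lra. }
        lra.
      * lra.
      * ring.
      * ring.
Qed.
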